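(* Let $k$ be a field, $R=k[x_1,\ldots,x_n]$, and let $I$ be an almost reverse lexicographic ideal in $R$ whose last generator is $M_\omega=x_1^{\omega_1}\cdots x_\mu^{\omega_\mu}$ with $\omega_\mu>0$. Then the minimal monomial generating set of $I$ is \[\mathcal{G}(I)=\{x_1^{f_1}\}\cup\bigcup_{i=1}^{\mu-1}\{x^\alpha x_{i+1}^{f_{i+1}(\alpha)}:\ \alpha=(\alpha_1,\ldots,\alpha_i)\in\mathcal{I}_i\}.\]
   Context: Monomial order: degree reverse lexicographic: for $M=x^\alpha,N=x^\beta$, $M>N$ iff $\deg M>\deg N$, or degrees are equal and for the largest $s$ with $\alpha_s\neq\beta_s$ one has $\alpha_s<\beta_s$. For $\alpha\in\mathbb{Z}^s_{\ge0}$, $x^\alpha=x_1^{\alpha_1}\cdots x_s^{\alpha_s}$, $|\alpha|=\sum\alpha_j$, and $\alpha\le\beta$ iff $x^\alpha\le x^\beta$. A monomial ideal $I$ is almost reverse lexicographic if for every monomial $M$ and every minimal monomial generator $N$ of $I$ with $\deg M=\deg N$ and $M>N$, one has $M\in I$. $\mathcal{G}(I)$ is the minimal monomial generating set; $\max M$ is the largest $i$ with $x_i\mid M$. The last generator $M_\omega$ is the element of $\mathcal{G}(I)$ of maximal degree that is smallest in the order among elements of $\mathcal{G}(I)$ of that degree; $\mu=\max M_\omega$. $f_1=\min\{t:x_1^t\in I\}$; for $2\le i\le\mu$, $\alpha\in\mathbb{Z}^{i-1}_{\ge0}$, $f_i(\alpha)=\min\{t\ge0:x^\alpha x_i^t\in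 I\}\in\mathbb{Z}_{\ge0}\cup\{\infty\}$. For $1\le i\le\mu-2$, $\mathcal{I}_i=\{(\alpha_1,\ldots,\alpha_i)\in\mathbb{Z}^i_{\ge0}: 0\le\alpha_1<f_1,\ 0\le\alpha_j<f_j(\alpha_1,\ldots,\alpha_{j-1})\ (2\le j\le i)\}$, and $\mathcal{I}_{\mu-1}$ is the set of $(\alpha_1,\ldots,\alpha_{\mu-1})$ satisfying these inequalities for $j\le\mu-1$ together with $(\alpha_1,\ldots,\alpha_{\mu-1})\ge(\omega_1,\ldots,\omega_{\mu-1})$. (If $\mu=1$ the union is empty.) *)

(* Defs.v *)
From HB Require Import structures.
From mathcomp Require Import all_boot all_algebra.
From mathcomp Require Import mpoly.
Set Implicit Arguments. Unset Strict Implicit. Unset Printing Implicit Defensive.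
Import GRing.Theory.
Local Open Scope ring_scope.

(* Exponent vectors are handled as functions nat -> nat, 1-based:
   a j is the exponent of x_j (a 0 and a j for j > n are ignored / 0). *)

Definition ex (n : nat) (m : 'X_{1..n}) (j : nat) : nat :=
  if j is j'.+1 then nth 0%N (multinom_val m) j' else 0%N.

Definition mono (n : nat) (a : nat -> nat) : 'X_{1..n} :=
  [multinom a i.+1 | i < n].

Definition deg_s (s : nat) (a : nat -> nat) : nat := (\sum_(1 <= j < s.+1) a j)%N.

Definition drl_gt (s : nat) (a b : nat -> nat) : Prop :=
  (deg_s s b < deg_s s a)%N \/
  (deg_s s a = deg_s s b /\
   exists j, [/\ (1 <= j <= s)%N, (a j < b j)%N &
                 forall l, (j < l <= s)%N -> a l = b l]).

Definition drl_le (s : nat) (a b : nat -> nat) : Prop :=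
  (forall j, (1 <= j <= s)%N -> a j = b j) \/ drl_gt s b a.

Section MonIdeal.
Variables (k : fieldType) (n : nat).

Definition is_ideal (I : {pred {mpoly k[n]}}) : Prop :=
  [/\ 0 \in I,
      (forall p q, p \in I -> q \in I -> p + q \in I) &
      (forall r p, p \in I -> r * p \in I)].

Definition monomial_ideal (I : {pred {mpoly k[n]}}) : Prop :=
  is_ideal I /\
  forall p, p \in I ->
    exists s : seq ({mpoly k[n]} * 'X_{1..n}),
      (forall c, c \in s -> 'X_[c.2] \in I) /\
      p = \sum_(c <- s) c.1 * 'X_[c.2].

Definition mingen (I : {pred {mpoly k[n]}}) (m : 'X_{1..n}) : Prop :=
  'X_[m] \in I /\
  forall m' : 'X_{1..n}, (m' <= m)%MM -> 'X_[m'] \in I -> m' = m.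

Definition almost_revlex (I : {pred {mpoly k[n]}}) : Prop :=
  forall M N : 'X_{1..n}, mingen I N -> mdeg M = mdeg N ->
    drl_gt n (ex M) (ex N) -> 'X_[M] \in I.

Definition last_gen (I : {pred {mpoly k[n]}}) (w : 'X_{1..n}) : Prop :=
  [/\ mingen I w,
      (forall g, mingen I g -> (mdeg g <= mdeg w)%N) &
      (forall g, mingen I g -> mdeg g = mdeg w -> drl_le n (ex w) (ex g))].

Definition max_var (w : 'X_{1..n}) (mu : nat) : Prop :=
  [/\ (1 <= mu <= n)%N, (0 < ex w mu)%N & forall j, (mu < j)%N -> ex w j = 0%N].

Definition inI (I : {pred {mpoly k[n]}}) (a : nat -> nat) : Prop :=
  'X_[mono n a] \in I.

Definition pre (a : nat -> nat) (j : nat) : nat -> nat :=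
  fun l => if (1 <= l < j)%N then a l else 0%N.

Definition xpow (a : nat -> nat) (j t : nat) : nat -> nat :=
  fun l => if l == j then t else pre a j l.

(* t = f_j(a_1,...,a_{j-1}) (and this minimum is finite) ;
   for j = 1 this is t = f_1 *)
Definition is_f (I : {pred {mpoly k[n]}}) (a : nat -> nat) (j t : nat) : Prop :=
  inI I (xpow a j t) /\ forall t', (t' < t)%N -> ~ inI I (xpow a j t').

(* b < f_j(a_1,...,a_{j-1}), where f_j = min{t : ...} in N u {oo} *)
Definition lt_f (I : {pred {mpoly k[n]}}) (a : nat -> nat) (j b : nat) : Prop :=
  forall t, inI I (xpow a j t) -> (b < t)%N.

Definition in_calI (I : {pred {mpoly k[n]}}) (w : 'X_{1..n}) (mu i : nat)
    (alpha : nat -> nat) : Prop :=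
  [/\ (forall l, (l == 0%N) || (i < l)%N -> alpha l = 0%N),
      (forall j, (1 <= j <= i)%N -> lt_f I alpha j (alpha j)) &
      (i = mu.-1 -> drl_le mu.-1 (ex w) alpha)].

End MonIdeal.

(* Main.v *)
Require Import Defs.
From HB Require Import structures.
From mathcomp Require Import all_boot all_algebra.
From mathcomp Require Import mpoly.
From mathcomp Require Import zify.
From Stdlib Require Import Classical.
Set Implicit Arguments. Unset Strict Implicit. Unset Printing Implicit Defensive.
Import GRing.Theory.

Lemma ex_ord n (m : 'X_{1..n}) (i : 'I_n) : ex m i.+1 = m i.
Proof. by rewrite /= mnm_tnth (tnth_nth 0%N). Qed.

Lemma ex_out n (m : 'X_{1..n}) j : (j == 0%N) || (n < j)%N -> ex m j = 0%N.
Proof.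
case: j => [|j] //= H; apply: nth_default; by rewrite size_tuple.
Qed.

Lemma ex_mono n a j : ex (mono n a) j = if (1 <= j <= n)%N then a j else 0%N.
Proof.
case: j => [|j] //. case: ifP => H.
  have Hj : (j < n)%N by [].
  by have := ex_ord (mono n a) (Ordinal Hj); rewrite mnmE /= => ->.
rewrite /=; apply: nth_default; rewrite size_tuple card_ord; move: H => /= /negbT; by rewrite -leqNgt.
Qed.

Lemma mnm_ex n (m1 m2 : 'X_{1..n}) :
  (forall j, (1 <= j <= n)%N -> ex m1 j = ex m2 j) -> m1 = m2.
Proof. move=> H; apply/mnmP => i; by have := H i.+1 (ltn_ord i); rewrite !ex_ord. Qed.

Lemma mono_ex n (m : 'X_{1..n}) : mono n (ex m) = m.
Proof. apply: mnm_ex => j Hj; by rewrite ex_mono Hj. Qed.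

Lemma mono_eq n a b : (forall j, (1 <= j <= n)%N -> a j = b j) -> mono n a = mono n b.
Proof. move=> H; apply: mnm_ex => j Hj; by rewrite !ex_mono Hj H. Qed.

Lemma lepm_ex n (m1 m2 : 'X_{1..n}) :
  (m1 <= m2)%MM <-> (forall j, (1 <= j <= n)%N -> (ex m1 j <= ex m2 j)%N).
Proof.
split.
  move/mnm_lepP => H [|j] //= Hj. have Hj' : (j < n)%N by [].
  by have := H (Ordinal Hj'); rewrite -!ex_ord.
move=> H; apply/mnm_lepP => i; by have := H i.+1 (ltn_ord i); rewrite !ex_ord.
Qed.

Lemma mdeg_ex n (m : 'X_{1..n}) : mdeg m = deg_s n (ex m).
Proof.
rewrite mdegE /deg_s big_add1 /= big_mkord; apply: eq_bigr => i _.
by rewrite -ex_ord.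
Qed.
Section NatLemmas.
Local Open Scope nat_scope.

Lemma deg_s_eq s a b : (forall j, 1 <= j <= s -> a j = b j) -> deg_s s a = deg_s s b.
Proof. move=> H; apply: eq_big_nat => j /andP[H1 H2]; apply: H; by rewrite H1 -ltnS. Qed.

Lemma deg_s_recr s a : deg_s s.+1 a = deg_s s a + a s.+1.
Proof. by rewrite /deg_s big_nat_recr. Qed.

Lemma deg_s0 a : deg_s 0 a = 0.
Proof. by rewrite /deg_s big_geq. Qed.

Lemma deg_s_ext s k a : (forall l, s < l <= s + k -> a l = 0) -> deg_s (s + k) a = deg_s s a.
Proof.
elim: k => [|k IH] H; first by rewrite addn0.
rewrite addnS deg_s_recr IH; last by move=> l Hl; apply: H; lia.
rewrite H; [lia|]. lia.
Qed.

Lemma deg_s_ext' s s' a : s <= s' -> (forall l, s < l -> a l = 0) -> deg_s s' a = deg_s s a.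
Proof. move=> Hs H; rewrite -(subnKC Hs); apply: deg_s_ext => l Hl; apply: H; lia. Qed.

Lemma deg_s_xchg s a b c d : (forall l, 1 <= l <= s -> a l + c l = b l + d l) ->
  deg_s s a + deg_s s c = deg_s s b + deg_s s d.
Proof. move=> H; rewrite /deg_s -!big_split; apply: eq_big_nat => l /andP[H1 H2]; apply: H; lia. Qed.

Lemma sum_delta0 s j c : s < j -> deg_s s (fun l => if l == j then c else 0) = 0.
Proof.
elim: s => [|s IH] H; first by rewrite deg_s0.
rewrite deg_s_recr IH; last lia. case: ifP => /eqP; lia.
Qed.

Lemma sum_delta s j c : 1 <= j <= s -> deg_s s (fun l => if l == j then c else 0) = c.
Proof.
elim: s => [|s IH] H; first lia.
rewrite deg_s_recr. case: (ltngtP j s.+1) => Hj.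
- rewrite IH; lia.
- lia.
- rewrite sum_delta0 //; move/eqP: Hj; lia.
Qed.

Lemma divisor_ex s v e : e <= deg_s s v ->
  exists u, [/\ forall l, u l <= v l, forall l, s < l -> u l = 0 & deg_s s u = e].
Proof.
elim: s e => [|s IH] e He.
  exists (fun _ => 0); split=> //. rewrite !deg_s0 in He *. lia.
case: (leqP e (deg_s s v)) => Hle.
  have [u [H1 H2 H3]] := IH e Hle.
  exists u; split=> //; first by move=> l Hl; apply: H2; lia.
  by rewrite deg_s_recr H3 H2 ?addn0.
exists (fun l => if l <= s then v l else if l == s.+1 then e - deg_s s v else 0).
split.
- move=> l; case: ifP => // _; case: ifP => /eqP // ->. rewrite deg_s_recr in He; lia.
- move=> l Hl; case: ifP; first lia. case: ifP => /eqP; lia.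
- rewrite deg_s_recr ifF; last lia. rewrite eqxx.
  rewrite (@deg_s_eq s _ v); last by move=> j Hj; rewrite ifT //; lia.
  lia.
Qed.

Lemma tri s a b :
  (forall j, 1 <= j <= s -> a j = b j) \/
  (exists j, [/\ 1 <= j <= s, a j < b j & forall l, j < l <= s -> a l = b l]) \/
  (exists j, [/\ 1 <= j <= s, b j < a j & forall l, j < l <= s -> a l = b l]).
Proof.
elim: s => [|s IH]; first by left => j; lia.
case: (ltngtP (a s.+1) (b s.+1)) => H.
- right; left; exists s.+1; split=> //; lia.
- right; right; exists s.+1; split=> //; lia.
case: IH => [H1|[[j [Hj1 Hj2 Hj3]]|[j [Hj1 Hj2 Hj3]]]].
- left => j Hj; case: (ltngtP j s.+1) => Hjs; [apply: H1; lia| lia| by rewrite Hjs].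
- right; left; exists j; split=> //; first lia.
  move=> l Hl; case: (ltngtP l s.+1) => Hls; [apply: Hj3; lia|lia|by rewrite Hls].
- right; right; exists j; split=> //; first lia.
  move=> l Hl; case: (ltngtP l s.+1) => Hls; [apply: Hj3; lia|lia|by rewrite Hls].
Qed.

Lemma maxvar_ex s a : (exists j, 1 <= j <= s /\ 0 < a j) ->
  exists p, [/\ 1 <= p <= s, 0 < a p & forall l, p < l <= s -> a l = 0].
Proof.
elim: s => [|s IH] [j Hj]; first lia.
case: (posnP (a s.+1)) => H.
  have [|p [Hp1 Hp2 Hp3]] := IH.
    exists j; split; last by case: Hj.
    case: Hj => Hj1 Hj2. case: (ltngtP j s.+1) => Hjs; [lia|lia|by move: Hj2; rewrite Hjs H].
  exists p; split=> //; first lia.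
  move=> l Hl; case: (ltngtP l s.+1) => Hls; [apply: Hp3; lia|lia|by rewrite Hls].
exists s.+1; split=> //; lia.
Qed.

Lemma drl_gt_eq s a b a' b' : (forall j, 1 <= j <= s -> a j = a' j) ->
  (forall j, 1 <= j <= s -> b j = b' j) -> drl_gt s a b -> drl_gt s a' b'.
Proof.
move=> Ha Hb; rewrite /drl_gt (deg_s_eq Ha) (deg_s_eq Hb).
case=> [H|[H [j [Hj1 Hj2 Hj3]]]]; [by left| right; split=> //].
exists j; split=> //; first by rewrite -Ha // -Hb.
move=> l Hl; rewrite -Ha ?Hj3 ?Hb //; lia.
Qed.

Lemma drl_asym s a b : drl_gt s a b -> drl_gt s b a -> False.
Proof.
case=> [H|[H [j [Hj1 Hj2 Hj3]]]] [H'|[H' [j' [Hj1' Hj2' Hj3']]]]; try lia.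
case: (ltngtP j j') => Hjj.
- have := Hj3 j'; lia.
- have := Hj3' j; lia.
- subst; lia.
Qed.

Lemma drl_irr s a b : (forall j, 1 <= j <= s -> a j = b j) -> drl_gt s a b -> False.
Proof.
move=> H [H'|[H' [j [Hj1 Hj2 Hj3]]]]; first by move: H'; rewrite (deg_s_eq H); lia.
have := H j Hj1; lia.
Qed.

End NatLemmas.

Section MonoLemmas.
Local Open Scope nat_scope.

Lemma deg_s_le s a b : (forall j, 1 <= j <= s -> a j <= b j) -> deg_s s a <= deg_s s b.
Proof.
elim: s => [|s IH] H; first by rewrite !deg_s0.
rewrite !deg_s_recr; have := IH (fun l Hl => H l ltac:(lia)); have := H s.+1 ltac:(lia); lia.
Qed.

Lemma deg_s_lt s a b : (forall j, 1 <= j <= s -> a j <= b j) ->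
  (exists j, 1 <= j <= s /\ a j < b j) -> deg_s s a < deg_s s b.
Proof.
elim: s => [|s IH] H [j [Hj1 Hj2]]; first lia.
have H' : forall l, 1 <= l <= s -> a l <= b l by move=> l Hl; apply: H; lia.
have Hs := H s.+1 ltac:(lia).
rewrite !deg_s_recr. case: (ltngtP j s.+1) => Hjs.
- have Hj3 : 1 <= j <= s by lia.
  have := IH H' (ex_intro _ j (conj Hj3 Hj2)). lia.
- lia.
- have := deg_s_le H'. subst j. lia.
Qed.

Variables (k : fieldType) (n : nat).

Lemma up_closed (I : {pred {mpoly k[n]}}) a b : is_ideal I -> inI I a ->
  (forall j, 1 <= j <= n -> a j <= b j) -> inI I b.
Proof.
move=> [_ _ HM] Ha H.
have Hle : (mono n a <= mono n b)%MM.
  apply/lepm_ex => j Hj; rewrite !ex_mono Hj; exact: H.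
rewrite /inI -(submK Hle) mpolyXD; exact: HM.
Qed.

Lemma mingen_le (I : {pred {mpoly k[n]}}) m b : mingen I m ->
  (forall j, 1 <= j <= n -> b j <= ex m j) -> inI I b ->
  forall j, 1 <= j <= n -> b j = ex m j.
Proof.
move=> [_ Hm] H Hb j Hj.
have Hle : (mono n b <= m)%MM.
  apply/lepm_ex => l Hl; rewrite !ex_mono Hl; exact: H.
by rewrite -(Hm _ Hle Hb) ex_mono Hj.
Qed.

Lemma mingen_intro (I : {pred {mpoly k[n]}}) c : inI I c ->
  (forall b, (forall j, 1 <= j <= n -> b j <= c j) -> inI I b ->
     forall j, 1 <= j <= n -> b j = c j) -> mingen I (mono n c).
Proof.
move=> Hc H; split=> // m' Hle Hin.
apply: mnm_ex => j Hj; rewrite ex_mono Hj; apply: H => //.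
  move/lepm_ex: Hle => Hle l Hl; have := Hle l Hl; by rewrite ex_mono Hl.
by rewrite /inI mono_ex.
Qed.

Lemma mingen_step (I : {pred {mpoly k[n]}}) a : inI I a -> ~ mingen I (mono n a) ->
  exists b, [/\ forall j, 1 <= j <= n -> b j <= a j, deg_s n b < deg_s n a & inI I b].
Proof.
move=> Ha Hm.
have [m' Hm'] : exists m', ~ ((m' <= mono n a)%MM -> 'X_[m'] \in I -> m' = mono n a).
  apply: not_all_ex_not => H; apply: Hm; by split.
have [Hle Hm''] := imply_to_and _ _ Hm'. have [Hin Hne] := imply_to_and _ _ Hm''.
have Hle' : forall j, 1 <= j <= n -> ex m' j <= a j.
  move=> j Hj; move/lepm_ex: Hle => /(_ j Hj); by rewrite ex_mono Hj.
have [j [Hj Hlt]] : exists j, 1 <= j <= n /\ ex m' j < a j.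
  apply: NNPP => Hn; apply: Hne; apply: mnm_ex => j Hj; rewrite ex_mono Hj.
  apply/eqP; rewrite eqn_leq Hle' //=; rewrite leqNgt; apply/negP => Hl; apply: Hn; by exists j.
exists (ex m'); split=> //; first exact: (deg_s_lt Hle' (ex_intro _ j (conj Hj Hlt))).
by rewrite /inI mono_ex.
Qed.

Lemma exists_mingen (I : {pred {mpoly k[n]}}) a : inI I a ->
  exists N, mingen I N /\ forall j, 1 <= j <= n -> ex N j <= a j.
Proof.
have : deg_s n a <= deg_s n a by [].
move: {-1}(deg_s n a) => d; elim: d a => [|d IH] a Hd Ha.
  case: (classic (mingen I (mono n a))) => Hm.
    by exists (mono n a); split=> // j Hj; rewrite ex_mono Hj.
  have [b [Hb1 Hb2 Hb3]] := mingen_step Ha Hm; lia.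
case: (classic (mingen I (mono n a))) => Hm.
  by exists (mono n a); split=> // j Hj; rewrite ex_mono Hj.
have [b [Hb1 Hb2 Hb3]] := mingen_step Ha Hm.
have [N [HN HNle]] := IH b ltac:(lia) Hb3.
exists N; split=> // l Hl; apply: leq_trans (HNle l Hl) (Hb1 l Hl).
Qed.

Lemma AR_fun (I : {pred {mpoly k[n]}}) N b : almost_revlex I -> mingen I N ->
  deg_s n b = deg_s n (ex N) -> drl_gt n b (ex N) -> inI I b.
Proof.
move=> HAR HN Hd Hg; apply: (HAR (mono n b) N) => //.
  rewrite !mdeg_ex -Hd; apply: deg_s_eq => j Hj; by rewrite ex_mono Hj.
apply: drl_gt_eq Hg => // j Hj; by rewrite ex_mono Hj.
Qed.

Lemma Ucontra (I : {pred {mpoly k[n]}}) w m u : almost_revlex I -> last_gen I w ->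
  mingen I m -> (forall j, 1 <= j <= n -> u j <= ex w j) ->
  deg_s n u = deg_s n (ex m) -> drl_gt n u (ex m) -> False.
Proof.
move=> HAR [Hw Hdeg Hlast] Hm Hle Hd Hg.
have Hu := AR_fun HAR Hm Hd Hg.
have Heq := mingen_le Hw Hle Hu.
have Hmd : mdeg m = mdeg w.
  by rewrite !mdeg_ex -Hd; apply: deg_s_eq.
case: (Hlast m Hm Hmd) => [H|H].
  apply: (drl_irr _ Hg) => j Hj; by rewrite Heq // H.
apply: (drl_asym Hg); apply: drl_gt_eq H => // j Hj; by rewrite Heq.
Qed.

End MonoLemmas.
Section Rev.
Local Open Scope nat_scope.
Variables (k : fieldType) (n : nat).

Lemma rev_case1 (I : {pred {mpoly k[n]}}) t : 1 <= n -> is_f I (fun _ => 0) 1 t ->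
  mingen I (mono n (xpow (fun _ => 0) 1 t)).
Proof.
move=> Hn [Hin Hmin]; apply: mingen_intro => // b Hb Hinb.
have Hb1 := Hb 1 ltac:(lia).
have Hbo : forall j, 1 <= j <= n -> j != 1 -> b j = 0.
  move=> j Hj Hj1; have := Hb j Hj; rewrite /xpow /pre (negbTE Hj1) if_same; lia.
have Heq : b 1 = t.
  move: Hb1; rewrite /xpow /pre eqxx => Hb1.
  case: (ltngtP (b 1) t) => H; [|lia|done].
  exfalso; apply: (Hmin (b 1) H); move: Hinb; rewrite /inI (mono_eq (b := xpow (fun _ => 0) 1 (b 1))) //.
  move=> j Hj; rewrite /xpow /pre; case: eqP => [->//|/eqP Hj1]; rewrite if_same Hbo //.
move=> j Hj; rewrite /xpow /pre; case: eqP => [->//|/eqP Hj1]; rewrite if_same Hbo //.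
Qed.

Lemma xpow_sup (a : nat -> nat) i t l : (forall l, (l == 0) || (i < l) -> a l = 0) ->
  xpow a i.+1 t l = if l == i.+1 then t else a l.
Proof.
move=> Ha; rewrite /xpow /pre; case: eqP => // Hl; case: ifP => // H.
rewrite Ha //; lia.
Qed.

Lemma xpow_self (a : nat -> nat) i l : (forall l, (l == 0) || (i < l) -> a l = 0) ->
  xpow a i (a i) l = a l.
Proof.
move=> Ha; rewrite /xpow /pre; case: eqP => [->//|Hl]; case: ifP => // H.
rewrite Ha //; lia.
Qed.

Lemma rev_case2 (I : {pred {mpoly k[n]}}) i a t : is_ideal I -> almost_revlex I ->
  1 <= i -> i < n -> (forall l, (l == 0) || (i < l) -> a l = 0) ->
  lt_f I a i (a i) -> is_f I a i.+1 t -> mingen I (mono n (xpow a i.+1 t)).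
Proof.
move=> HI HAR Hi1 Hin Ha Hlt [Hinc Hmin].
have Hna : ~ inI I a.
  move=> H; have := Hlt (a i); rewrite /inI (mono_eq (b := a)); last first.
    by move=> j Hj; rewrite xpow_self.
  move=> /(_ H); lia.
have Ht : 0 < t.
  case: (posnP t) => // Ht0; exfalso; apply: Hna; move: Hinc.
  rewrite /inI (mono_eq (b := a)) // => j Hj; rewrite xpow_sup // Ht0; case: eqP => // ->.
  rewrite Ha //; lia.
apply: mingen_intro => // b Hb Hinb.
have [N [HN HNle]] := exists_mingen Hinb.
have HNin : inI I (ex N) by rewrite /inI mono_ex; case: HN.
have HNc : forall l, 1 <= l <= n -> ex N l <= xpow a i.+1 t l.
  move=> l Hl; exact: leq_trans (HNle l Hl) (Hb l Hl).
have HNt : ex N i.+1 = t.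
  have := HNc i.+1 ltac:(lia); rewrite xpow_sup // eqxx => H1.
  case: (ltngtP (ex N i.+1) t) => H2; [|lia|done].
  exfalso; apply: (Hmin _ H2); apply: (up_closed HI HNin) => l Hl.
  rewrite xpow_sup //; case: eqP => [->//|Hl']; have := HNc l Hl; rewrite xpow_sup //.
  by case: eqP.
have HNeq : forall l, 1 <= l <= n -> ex N l = xpow a i.+1 t l.
  move=> l Hl; rewrite xpow_sup //; case: eqP => [->//|Hli].
  have := HNc l Hl; rewrite xpow_sup //; case: eqP => // _ HNl.
  case: (ltngtP (ex N l) (a l)) => H2; [|lia|done].
  have Hli' : l <= i.
    case: (leqP l i) => // Hil; move: H2; rewrite Ha //; lia.
  pose N' := fun l' => if l' == l then ex N l + 1 else if l' == i.+1 then ex N i.+1 - 1 else ex N l'.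
  have HdN' : deg_s n N' = deg_s n (ex N).
    have Hl_ne : l != i.+1 by apply/eqP.
    have Hx : forall l', 1 <= l' <= n -> N' l' + (if l' == i.+1 then 1 else 0) =
                 ex N l' + (if l' == l then 1 else 0).
      move=> l' Hl'; rewrite /N'; case: (eqVneq l' l) => [->|Hl'l].
        by rewrite (negbTE Hl_ne) addn0.
      case: ifP => /eqP Hc; [subst l'; lia|lia].
    have := deg_s_xchg Hx; rewrite !sum_delta; lia.
  have Hli2 : (i.+1 == l) = false by apply/eqP; lia.
  have HN'in : inI I N'.
    apply: (AR_fun HAR HN HdN'); right; split=> //; exists i.+1; split.
    - lia.
    - rewrite /N' Hli2 eqxx; lia.
    - move=> l' Hl'; rewrite /N' ifF; last by apply/eqP; lia.
      rewrite ifF //; apply/eqP; lia.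
  exfalso; apply: (Hmin (t - 1)); first lia.
  apply: (up_closed HI HN'in) => l' Hl'; rewrite xpow_sup // /N'.
  case: (eqVneq l' l) => [El|Hl'l].
    subst l'; rewrite (negbTE (introN eqP Hli)); lia.
  case: (eqVneq l' i.+1) => [El|Hl'i]; first lia.
  have := HNc l' Hl'; by rewrite xpow_sup // (negbTE Hl'i).
move=> j Hj; have := HNeq j Hj; have := HNle j Hj; have := Hb j Hj; lia.
Qed.

Lemma deg_s_zero s : deg_s s (fun _ => 0) = 0.
Proof. elim: s => [|s IH]; by rewrite ?deg_s0 // deg_s_recr IH. Qed.

Lemma fwd (I : {pred {mpoly k[n]}}) w mu m : is_ideal I -> almost_revlex I ->
  last_gen I w -> max_var w mu -> mingen I m ->
    (exists t, is_f I (fun _ => 0%N) 1 t /\ m = mono n (xpow (fun _ => 0%N) 1 t)) \/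
    (exists i, (1 <= i <= mu.-1)%N /\
       exists alpha, in_calI I w mu i alpha /\
         exists t, is_f I alpha i.+1 t /\ m = mono n (xpow alpha i.+1 t)).
Proof.
move=> HI HAR Hlg [Hmu Hwmu Hwab] Hm.
have [Hw Hdeg Hlast] := Hlg.
have Hinm : inI I (ex m) by rewrite /inI mono_ex; case: Hm.
have Hmin := mingen_le Hm.
have Hex : exists j, 1 <= j <= n /\ 0 < ex m j.
  apply: NNPP => Hn.
  have Hz : forall j, 1 <= j <= n -> ex m j = 0.
    move=> j Hj; case: (posnP (ex m j)) => // Hp; exfalso; apply: Hn; by exists j.
  have Hle : forall j, 1 <= j <= n -> ex m j <= ex w j by move=> j Hj; rewrite Hz.
  have := mingen_le Hw Hle Hinm Hmu; rewrite Hz //; lia.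
have [p [Hp1 Hp2 Hp3]] := maxvar_ex Hex.
have Hz : forall l, p < l -> ex m l = 0.
  move=> l Hl; case: (leqP l n) => Hln; first by apply: Hp3; lia.
  apply: ex_out; apply/orP; right; lia.
case: (eqVneq p 1) => Hp.
  subst p; left; exists (ex m 1).
  have Heq : m = mono n (xpow (fun _ => 0) 1 (ex m 1)).
    rewrite -{1}(mono_ex m); apply: mono_eq => j Hj; rewrite /xpow /pre.
    case: eqP => [->//|Hj1]; rewrite if_same Hz //; lia.
  split=> //; split; first by rewrite /inI -Heq; case: Hm.
  move=> t' Ht' Hin.
  have Hle : forall j, 1 <= j <= n -> xpow (fun _ => 0) 1 t' j <= ex m j.
    move=> j Hj; rewrite /xpow /pre; case: eqP => [->|_]; [lia|by rewrite if_same].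
  have := Hmin _ Hle Hin 1 ltac:(lia).
  rewrite /xpow /pre eqxx; lia.
destruct p as [|i]; first lia.
have Hi1 : 1 <= i by lia.
set a := pre (ex m) i.+1.
set t := ex m i.+1.
have Ha : forall l, (l == 0) || (i < l) -> a l = 0.
  move=> l Hl; rewrite /a /pre; case: ifP => //; lia.
have Hae : forall l, 1 <= l <= i -> a l = ex m l.
  move=> l Hl; rewrite /a /pre ifT //; lia.
have Heq : m = mono n (xpow a i.+1 t).
  rewrite -{1}(mono_ex m); apply: mono_eq => j Hj; rewrite xpow_sup //.
  case: eqP => [->//|Hj1]; rewrite /a /pre; case: ifP => // Hj2; rewrite Hz //; lia.
have Hen : deg_s n (ex m) = deg_s i a + t.
  rewrite (@deg_s_ext' i.+1 n) // deg_s_recr; congr (_ + _); apply: deg_s_eq => l Hl.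
  by rewrite Hae.
have Hedeg : deg_s n (ex m) <= deg_s n (ex w).
  by have := Hdeg m Hm; rewrite !mdeg_ex.
have Himu : i.+1 <= mu.
  case: (leqP i.+1 mu) => // Hlt; exfalso.
  have [u [Hu1 Hu2 Hu3]] := divisor_ex Hedeg.
  apply: (Ucontra HAR Hlg Hm (u := u)) => //.
  right; split=> //; exists i.+1; split.
  - lia.
  - have := Hu1 i.+1; rewrite Hwab //; lia.
  - move=> l Hl; have := Hu1 l; rewrite Hwab ?Hz //; lia.
right; exists i; split; first by apply/andP; split=> //; lia.
exists a; split; last first.
  exists t; split=> //; split; first by rewrite /inI -Heq; case: Hm.
  move=> t' Ht' Hin.
  have Hle : forall l, 1 <= l <= n -> xpow a i.+1 t' l <= ex m l.
    move=> l Hl; rewrite xpow_sup //; case: eqP => [->|Hl']; first by rewrite -/t; lia.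
    rewrite /a /pre; case: ifP => //.
  have := Hmin _ Hle Hin i.+1 ltac:(lia).
  rewrite xpow_sup // eqxx; rewrite -/t; lia.
split=> //.
  move=> j Hj t'' Hin; rewrite ltnNge; apply/negP => Hle.
  have Hle' : forall l, 1 <= l <= n -> xpow a j t'' l <= ex m l.
    move=> l Hl; rewrite /xpow /pre; case: eqP => [->|Hlj]; first by rewrite Hae in Hle; lia.
    case: ifP => // Hl2; rewrite Hae //; lia.
  have := Hmin _ Hle' Hin i.+1 ltac:(lia).
  rewrite /xpow /pre ifF; last by apply/eqP; lia.
  rewrite ifF; last lia. lia.
move=> Himu2.
have Emu : mu = i.+1 by lia.
rewrite Emu /=.
have Hwz : forall l, i.+1 < l -> ex w l = 0 by move=> l Hl; apply: Hwab; lia.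
have Hdn : deg_s n (ex w) = deg_s i (ex w) + ex w i.+1.
  by rewrite (@deg_s_ext' i.+1 n) // ?deg_s_recr //; lia.
set A := deg_s i a in Hen; set Om := deg_s i (ex w) in Hdn.
set om := ex w i.+1 in Hdn.
set e := deg_s n (ex m) in Hen Hedeg; set d := deg_s n (ex w) in Hdn Hedeg.
have HX : (A < Om \/ (A = Om /\ exists j, [/\ 1 <= j <= i, ex w j < a j &
              forall l, j < l <= i -> ex w l = a l])) -> False.
  move=> HX.
  case: (leqP (d - e) om) => HD.
    pose u := fun l => if l == i.+1 then om - (d - e) else ex w l.
    have Hx : forall l, 1 <= l <= n -> u l + (if l == i.+1 then d - e else 0) =
                 ex w l + 0.
      move=> l Hl; rewrite /u; case: ifP => /eqP // ->; rewrite -/om; lia.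
    have Hdu := deg_s_xchg Hx; rewrite deg_s_zero sum_delta in Hdu; last lia.
    apply: (Ucontra HAR Hlg Hm (u := u)).
    - move=> l Hl; rewrite /u; case: ifP => /eqP // ->; rewrite -/om; lia.
    - rewrite -/e -/d in Hdu *; lia.
    right; split; first by rewrite -/e -/d in Hdu *; lia.
    case: (ltnP (om - (d - e)) t) => Hlt.
      exists i.+1; split; [lia| by rewrite /u eqxx|].
      move=> l Hl; rewrite /u ifF; last by apply/eqP; lia.
      rewrite Hwz ?Hz //; lia.
    case: HX => [HX|[HA [j [Hj1 Hj2 Hj3]]]]; first lia.
    exists j; split; first lia.
      by rewrite /u ifF -?Hae //; apply/eqP; lia.
    move=> l Hl; rewrite /u; case: (ltngtP l i.+1) => Hli.
    - rewrite Hj3 ?Hae //; lia.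
    - rewrite Hwz ?Hz //.
    - rewrite Hli; lia.
  have He : e <= deg_s i (ex w) by rewrite -/Om; lia.
  have [u [Hu1 Hu2 Hu3]] := divisor_ex He.
  apply: (Ucontra HAR Hlg Hm (u := u)) => //.
  - rewrite (@deg_s_ext' i n) //; lia.
  right; split; first by rewrite (@deg_s_ext' i n) //; lia.
  exists i.+1; split; [lia|rewrite Hu2 //; lia|].
  move=> l Hl; rewrite Hu2 ?Hz //; lia.
case: (ltngtP Om A) => HOA.
- right; left; by rewrite -/A -/Om.
- exfalso; apply: HX; by left.
case: (tri i (ex w) a) => [H|[[j [Hj1 Hj2 Hj3]]|[j [Hj1 Hj2 Hj3]]]].
- by left.
- exfalso; apply: HX; right; split=> //; by exists j.
- right; right; split; first by rewrite -/A -/Om.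
  exists j; split=> // l Hl; by rewrite Hj3.
Qed.

End Rev.

Local Open Scope ring_scope.

Theorem proposition2p10 (k : fieldType) (n : nat) (I : {pred {mpoly k[n]}})
    (w : 'X_{1..n}) (mu : nat) :
  monomial_ideal I -> almost_revlex I -> last_gen I w -> max_var w mu ->
  forall m : 'X_{1..n},
    mingen I m <->
    (exists t, is_f I (fun _ => 0%N) 1 t /\ m = mono n (xpow (fun _ => 0%N) 1 t)) \/
    (exists i, (1 <= i <= mu.-1)%N /\
       exists alpha, in_calI I w mu i alpha /\
         exists t, is_f I alpha i.+1 t /\ m = mono n (xpow alpha i.+1 t)).
Proof.
move=> [HI _] HAR Hlg Hmv m.
have [Hmu _ _] := Hmv.
split; first exact: fwd.
case=> [[t [Hf ->]]|[i [Hi [a [[Ha Hlt _] [t [Hf ->]]]]]]].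
- apply: rev_case1 => //; lia.
- apply: rev_case2 => //; try lia. apply: Hlt; lia.
Qed.
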